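(* Let $G=(V,E)$ be a connected undirected unweighted graph on $N\ge1$ vertices such that every vertex has degree $d_1$ or $d_2$, where $d_1\le d_2$. Let $n_1$ be the number of vertices of degree $d_1$ and $n_2$ the number of vertices of degree $d_2$ (so $N=n_1+n_2$). For $\delta\in[0,1]$ let $\rho_1(\delta)=\mathsf{fp}_{r=1}^\delta(G,\{u\})$ for any $u$ with $\deg(u)=d_1$ and $\rho_2(\delta)=\mathsf{fp}_{r=1}^\delta(G,\{u\})$ for any $u$ with $\deg(u)=d_2$. Then for all $\delta\in[0,1]$ the derivatives $\rho_1'(\delta)$ and $\rho_2'(\delta)$ exist and $$\rho_1'(\delta)=-n_2\,Q(\delta),\qquad\rho_2'(\delta)=n_1\,Q(\delta),\qquad Q(\delta)=\frac{(d_2-d_1)(d_1+d_2)}{D(\delta)^2},$$ where $D(\delta)=d_1n_2+d_2n_1+\delta(d_1-d_2)(n_1-n_2)$. If $d_1<d_2$, then $\rho_1'(\delta)<0$ and $\rho_2'(\delta)>0$ for all $\delta\in[0,1]$; otherwise $\rho_1'(\delta)=\rho_2'(\delta)=0$ for all $\delta$.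
   Context: Mixed $\delta$-updating on $G$: each vertex holds a mutant (fitness $r$) or wild-type (fitness $1$); $f_S(x)$ is the fitness at $x$ when $S$ is the mutant set. At each step, with probability $\delta$ a death-Birth step: choose $v$ uniformly to die, choose a neighbor $u$ of $v$ with probability proportional to $f_S(u)$, $u$ copies its type onto $v$; with probability $1-\delta$ a Birth-death step: choose $u$ with probability proportional to $f_S(u)$ among all vertices, choose a uniformly random neighbor $v$ of $u$, $u$ copies its type onto $v$. $\mathsf{fp}_r^\delta(G,S_0)$ is the probability all vertices eventually become mutant from initial mutant set $S_0$ (with $r=1$, the value for a single starting vertex depends only on its degree here). *)

(* Defs.v *)
From HB Require Import structures.
From mathcomp Require Import all_boot all_order all_algebra.
From mathcomp Require Import all_classical all_reals all_analysis.
Set Implicit Arguments. Unset Strict Implicit. Unset Printing Implicit Defensive.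
Import Order.TTheory GRing.Theory Num.Theory.
Import numFieldNormedType.Exports.
Local Open Scope classical_set_scope.
Local Open Scope ring_scope.

Section Moran.
Variables (R : realType) (V : finType) (e : rel V).

Definition deg (v : V) : nat := #|[set w | e v w]|.

(* fitness of vertex x when S is the mutant set *)
Definition fit (r : R) (S : {set V}) (x : V) : R := if x \in S then r else 1.

Definition upd (S : {set V}) (u v : V) : {set V} :=
  if u \in S then v |: S else S :\ v.

(* One step of mixed delta-updating, as an operator on functions h of the
   state: (step h) S = expected value of h after one step from S.
   If the chosen vertex has no neighbour (only possible when #|V| = 1)
   nothing happens. *)
Definition step (delta r : R) (h : {set V} -> R) (S : {set V}) : R :=
  delta * \sum_(v : V) (#|V|%:R)^-1 *
      (if deg v == 0%N then h S else
       \sum_(u | e v u) fit r S u / (\sum_(w | e v w) fit r S w) * h (upd S u v))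
  + (1 - delta) * \sum_(u : V) fit r S u / (\sum_(w : V) fit r S w) *
      (if deg u == 0%N then h S else
       \sum_(v | e u v) (deg u)%:R^-1 * h (upd S u v)).

Fixpoint pfull (delta r : R) (n : nat) : {set V} -> R :=
  match n with
  | 0 => fun S => if S == [set: V]%SET then 1 else 0
  | n'.+1 => step delta r (pfull delta r n')
  end.

(* fixation probability fp_r^delta(G, S0): since the all-mutant state is
   absorbing, it is the limit of the n-step probabilities of being all-mutant *)
Definition fp (r delta : R) (S0 : {set V}) : R :=
  limn (fun n => pfull delta r n S0).

End Moran.

(* f has derivative l at x, relative to the parameter domain [0,1]
   (one-sided at the endpoints) *)
Definition deriv01 (R : realType) (f : R -> R) (x l : R) : Prop :=
  ((fun h => (f h - f x) / (h - x)) @ within [set h : R | 0 <= h <= 1] (dnbhs x))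
    --> l.

(* Main.v *)
Require Import Defs.
From HB Require Import structures.
From mathcomp Require Import all_boot all_order all_algebra.
From mathcomp Require Import all_classical all_reals all_analysis.
Import Order.TTheory GRing.Theory Num.Theory.
Import numFieldNormedType.Exports.
From mathcomp Require Import ring lra.
Set Implicit Arguments.
Local Open Scope ring_scope.

Lemma fit1 (R : realType) (V : finType) (S : {set V}) x : fit (1:R) S x = 1.
Proof. by rewrite /fit; case: ifP. Qed.

Lemma sum_edge1 (R : realType) (V : finType) (e : rel V) v :
  \sum_(w | e v w) (1:R) = (deg e v)%:R.
Proof.
rewrite /deg (eq_bigl (mem [set w | e v w]%classic)) ?sumr_const // => w.
by rewrite inE /=; apply/idP/idP => /asboolP.
Qed.

Lemma no_edge0 (V : finType) (e : rel V) v : deg e v = 0%N -> forall u, e v u = false.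
Proof.
move=> /card0_eq H u; apply/negP => evu.
move: (H u); rewrite inE /=.
have -> : (u \in [set w | e v w]%classic) by apply/asboolP.
done.
Qed.

Lemma inner_eq (R : realType) (V : finType) (e : rel V) v (a : R) (f : V -> R) :
  (if deg e v == 0%N then a else \sum_(u | e v u) (deg e v)%:R^-1 * f u)
  = a + \sum_(u | e v u) (deg e v)%:R^-1 * (f u - a).
Proof.
case: eqP => [/no_edge0 H|H].
  by rewrite big_pred0 ?addr0 // => u; rewrite H.
have Hd : (deg e v)%:R != 0 :> R by rewrite pnatr_eq0; apply/eqP.
under [in RHS]eq_bigr => u _ do rewrite mulrBr.
rewrite sumrB.
have -> : \sum_(u | e v u) (deg e v)%:R^-1 * a = a.
  have H2 : \sum_(u | e v u) a = (deg e v)%:R * a.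
    by rewrite -sum_edge1 mulr_suml; apply: eq_bigr => *; rewrite mul1r.
  by rewrite -mulr_sumr H2 mulrA mulVf // mul1r.
by rewrite addrC subrK.
Qed.

Lemma fitE (R : realType) (V : finType) : @fit R V 1 = fun _ _ => 1.
Proof. by apply/funext => S; apply/funext => x; rewrite /fit; case: ifP. Qed.

Lemma sumN (R : realType) (V : finType) : \sum_(w : V) (1:R) = #|V|%:R.
Proof. by rewrite sumr_const. Qed.

Lemma exch_sym (R : realType) (V : finType) (e : rel V) (F : V -> V -> R) :
  symmetric e ->
  \sum_u \sum_(v | e u v) F u v = \sum_v \sum_(u | e v u) F u v.
Proof.
move=> sym.
rewrite (eq_bigr (fun u => \sum_v (if e u v then F u v else 0))); last by move=> u _; rewrite big_mkcond.
rewrite exchange_big; apply: eq_bigr => v _; rewrite [RHS]big_mkcond.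
by apply: eq_bigr => u _; rewrite sym.
Qed.

Definition cf (R : realType) (V : finType) (e : rel V) (t : R) u v : R :=
  (t / (deg e v)%:R + (1-t)/(deg e u)%:R) / #|V|%:R.
Arguments cf {R V}.

Lemma step_eq (R : realType) (V : finType) (e : rel V) (t : R) h S :
  symmetric e -> (0 < #|V|)%N ->
  step e t 1 h S = h S + \sum_u \sum_(v | e u v) cf e t u v * (h (upd S u v) - h S).
Proof.
move=> sym N0.
have HN : #|V|%:R != 0 :> R by rewrite pnatr_eq0 -lt0n.
rewrite /step fitE /= sumN.
under eq_bigr => v _.
  rewrite sum_edge1.
  under eq_bigr => u _ do rewrite div1r.
  rewrite inner_eq mulrDr.
  over.
under [X in _ + _ * X]eq_bigr => u _.
  rewrite div1r inner_eq mulrDr.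
  over.
have sNi : \sum_(i : V) (#|V|%:R^-1:R) = 1.
  by rewrite -(mulr1 (#|V|%:R^-1)) -mulr_sumr sumN mulVf.
rewrite !big_split /= -!mulr_suml sNi !mul1r.
match goal with |- _ = _ + ?C => have -> : C = t * (\sum_i
      #|V|%:R^-1 *
      \sum_(u | e i u) (deg e i)%:R^-1 * (h (upd S u i) - h S)) + (1-t) * (\sum_i
      #|V|%:R^-1 *
      \sum_(u | e i u) (deg e i)%:R^-1 * (h (upd S i u) - h S)) end.
  rewrite !mulr_sumr.
  under eq_bigr => u _.
    under eq_bigr => v _ do rewrite /cf mulrDl mulrDl.
    rewrite big_split /=.
    over.
  rewrite big_split /=; congr (_ + _).
    rewrite exch_sym //; apply: eq_bigr => v _; rewrite !mulr_sumr.
    by apply: eq_bigr => u _; ring.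
  apply: eq_bigr => u _; rewrite !mulr_sumr.
  by apply: eq_bigr => v _; ring.
ring.
Qed.

Lemma step_mono (R : realType) (V : finType) (e : rel V) (t : R) (h g : {set V} -> R) S :
  0 <= t <= 1 -> (forall X, h X <= g X) -> step e t 1 h S <= step e t 1 g S.
Proof.
move=> /andP[t0 t1] hg.
have t1' : 0 <= 1 - t by rewrite subr_ge0.
rewrite /step fitE /=.
have c0 : forall x : R, 0 <= x -> 0 <= 1 / x by move=> x x0; rewrite div1r invr_ge0.
have s0 : forall P : pred V, 0 <= \sum_(w | P w) (1:R) by move=> P; apply: sumr_ge0 => *.
apply: lerD; apply: ler_wpM2l => //; apply: ler_sum => v _.
  apply: ler_wpM2l; first by rewrite invr_ge0.
  case: ifP => _ //; apply: ler_sum => u _; apply: ler_wpM2l => //.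
  by apply: divr_ge0 => //.
apply: ler_wpM2l; first by apply: divr_ge0 => //.
case: ifP => _ //; apply: ler_sum => u _; apply: ler_wpM2l => //.
Qed.

Lemma step_affine (R : realType) (V : finType) (e : rel V) (t : R) (h : {set V} -> R) a b S :
  symmetric e -> (0 < #|V|)%N ->
  step e t 1 (fun X => a + b * h X) S = a + b * step e t 1 h S.
Proof.
move=> sym N0; rewrite !step_eq // mulrDr mulr_sumr addrA; congr (_ + _).
apply: eq_bigr => u _; rewrite mulr_sumr; apply: eq_bigr => v _; ring.
Qed.

Lemma step_add (R : realType) (V : finType) (e : rel V) (t : R) (h g : {set V} -> R) S :
  symmetric e -> (0 < #|V|)%N ->
  step e t 1 (fun X => h X + g X) S = step e t 1 h S + step e t 1 g S.
Proof.
move=> sym N0; rewrite !step_eq //.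
have -> : forall a b c d : R, a + b + (c + d) = (a + c) + (b + d) by move=> *; ring.
congr (_ + _); rewrite -big_split; apply: eq_bigr => u _.
rewrite -big_split; apply: eq_bigr => v _ /=; ring.
Qed.

Lemma upd_setT (V : finType) (u v : V) : upd [set: V]%SET u v = [set: V]%SET.
Proof. by rewrite /upd inE; apply/setP => x; rewrite !inE orbT. Qed.

Lemma upd_set0 (V : finType) (u v : V) : upd finset.set0 u v = finset.set0.
Proof. by rewrite /upd inE; apply/setP => x; rewrite !inE andbF. Qed.

Lemma step_setT (R : realType) (V : finType) (e : rel V) (t : R) h :
  symmetric e -> (0 < #|V|)%N -> step e t 1 h [set: V]%SET = h [set: V]%SET.
Proof.
move=> sym N0; rewrite step_eq // big1 ?addr0 // => u _.
by rewrite big1 // => v _; rewrite upd_setT subrr mulr0.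
Qed.

Lemma step_set0 (R : realType) (V : finType) (e : rel V) (t : R) h :
  symmetric e -> (0 < #|V|)%N -> step e t 1 h finset.set0 = h finset.set0.
Proof.
move=> sym N0; rewrite step_eq // big1 ?addr0 // => u _.
by rewrite big1 // => v _; rewrite upd_set0 subrr mulr0.
Qed.

Lemma deg_pos (V : finType) (e : rel V) u v : e u v -> (0 < deg e u)%N.
Proof.
move=> euv; rewrite lt0n; apply/negP => /eqP /no_edge0 H.
by rewrite H in euv.
Qed.

Lemma cf_pos (R : realType) (V : finType) (e : rel V) (t : R) u v :
  symmetric e -> (0 < #|V|)%N -> 0 <= t <= 1 -> e u v -> 0 < cf e t u v.
Proof.
move=> sym N0 /andP[t0 t1] euv.
have du : 0 < (deg e u)%:R :> R by rewrite ltr0n; apply: deg_pos euv.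
have dv : 0 < (deg e v)%:R :> R by rewrite ltr0n; apply: (@deg_pos _ e v u); rewrite sym.
rewrite /cf divr_gt0 ?ltr0n //.
have [->|tn0] := eqVneq t 0.
  by rewrite mul0r add0r subr0 div1r invr_gt0.
have tp : 0 < t by rewrite lt_def tn0 t0.
apply: ltr_wpDr; first by apply: divr_ge0; rewrite ?subr_ge0 // ltW.
by apply: divr_gt0.
Qed.

Definition psi (R : realType) (V : finType) (p : V -> R) (X : {set V}) : R :=
  \sum_(v in X) p v.
Arguments psi {R V}.

Lemma psi_upd (R : realType) (V : finType) (p : V -> R) S u v :
  psi p (upd S u v) - psi p S =
  if u \in S then (if v \in S then 0 else p v) else (if v \in S then - p v else 0).
Proof.
rewrite /upd /psi; case: ifP => uS; case: ifP => vS.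
- have -> : v |: S = S by apply/setP => x; rewrite !inE; case: eqP => // ->.
  by rewrite subrr.
- by rewrite big_setU1 ?vS //= addrK.
- by rewrite [X in _ - X](big_setD1 _ vS) /= opprD addrCA subrr addr0.
- have -> : S :\ v = S by apply/setP => x; rewrite !inE; case: eqP => // ->; rewrite vS.
  by rewrite subrr.
Qed.

Lemma step_psi (R : realType) (V : finType) (e : rel V) (t : R) (p : V -> R) S :
  symmetric e -> (0 < #|V|)%N ->
  (forall u v, e u v -> p v * cf e t u v = p u * cf e t v u) ->
  step e t 1 (psi p) S = psi p S.
Proof.
move=> sym N0 bal; rewrite step_eq //.
set G := fun u v => if (u \in S) && (v \notin S) then cf e t u v * p v else 0.
have -> : \sum_u \sum_(v | e u v) cf e t u v * (psi p (upd S u v) - psi p S)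
   = \sum_u \sum_(v | e u v) (G u v - G v u).
  apply: eq_bigr => u _; apply: eq_bigr => v euv; rewrite psi_upd /G.
  case: (u \in S); case: (v \in S) => /=; rewrite ?subrr ?mulr0 ?subr0 //.
  by rewrite sub0r mulrN [cf e t v u * p u]mulrC -(bal _ _ euv) (mulrC (p v)).
under eq_bigr => u _ do rewrite sumrB.
rewrite sumrB exch_sym // subrr addr0 //.
Qed.

Lemma min_prop (R : realType) (V : finType) (e : rel V) (t : R) (g : {set V} -> R) m S u v :
  symmetric e -> (0 < #|V|)%N -> 0 <= t <= 1 ->
  (forall X, m <= g X) -> step e t 1 g S = g S -> g S = m -> e u v ->
  g (upd S u v) = m.
Proof.
move=> sym N0 t01 gm hS gS euv.
have H : \sum_u \sum_(v | e u v) cf e t u v * (g (upd S u v) - g S) = 0.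
  by move: hS; rewrite step_eq // => /eqP; rewrite -subr_eq0 addrAC subrr add0r => /eqP.
have P1 : forall u, true -> 0 <= \sum_(v | e u v) cf e t u v * (g (upd S u v) - g S).
  move=> w _; apply: sumr_ge0 => x ewx.
  by rewrite mulr_ge0 // ?subr_ge0 // ?gS // ltW // cf_pos.
have := @psumr_eq0P _ _ _ _ P1 H u isT.
have P2 : forall v, e u v -> 0 <= cf e t u v * (g (upd S u v) - g S).
  by move=> w ew; rewrite mulr_ge0 // ?subr_ge0 // ?gS // ltW // cf_pos.
move/(psumr_eq0P P2)/(_ v euv)/eqP.
rewrite mulf_eq0 (negbTE (lt0r_neq0 (@cf_pos _ _ _ _ _ _ sym N0 t01 euv))) /= subr_eq0 gS.
by move/eqP.
Qed.

Lemma cross (V : finType) (e : rel V) (S : {set V}) x y :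
  symmetric e -> (forall u v : V, connect e u v) -> x \in S -> y \notin S ->
  exists u v, [/\ u \in S, v \notin S & e u v].
Proof.
move=> sym con xS yS.
case/boolP: [exists u, exists v, [&& u \in S, v \notin S & e u v]].
  by case/existsP => u /existsP [v /and3P [uS vS euv]]; exists u, v.
move=> /negP Hn.
have cl : fingraph.closed e S.
  move=> a b eab /=.
  case aS: (a \in S); case bS: (b \in S) => //; exfalso; apply: Hn.
    by apply/existsP; exists a; apply/existsP; exists b; rewrite aS bS eab.
  by apply/existsP; exists b; apply/existsP; exists a; rewrite aS bS sym eab.
have := closed_connect cl (con x y); rewrite xS => yS2.
by rewrite -yS2 in yS.
Qed.

Lemma chain (R : realType) (V : finType) (e : rel V) (t : R) (g : {set V} -> R) m :
  symmetric e -> (forall u v : V, connect e u v) -> (0 < #|V|)%N -> 0 <= t <= 1 ->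
  (forall X, m <= g X) -> (forall X, step e t 1 g X = g X) ->
  forall k S, (#|~: S| <= k)%N -> S != finset.set0 -> g S = m -> g [set: V]%SET = m.
Proof.
move=> sym con N0 t01 gm harm; elim=> [|k IH] S Hk Sn0 gS.
  have : ~: S = finset.set0 by apply: cards0_eq; apply/eqP; rewrite -leqn0.
  move=> HC; have -> : [set: V]%SET = S.
    by apply/setP => x; rewrite inE; apply/esym; move/setP: HC => /(_ x); rewrite !inE => /negbFE.
  done.
have /set0Pn [x xS] := Sn0.
have [ST|] := eqVneq S [set: V]%SET; first by rewrite -ST.
move=> SnT.
have [y yS] : exists y, y \notin S.
  case: (pselect (exists y, y \notin S)) => // Hn.
  move/eqP: SnT; case; apply/setP => z; rewrite inE; apply/negPn/negP => zS.
  by apply: Hn; exists z.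
have [u [v [uS vS euv]]] := @cross _ _ _ _ _ sym con xS yS.
have := @min_prop _ _ _ _ _ _ _ _ _ sym N0 t01 gm (harm S) gS euv.
rewrite /upd uS => gv.
apply: (IH (v |: S)) => //.
- have E : ~: (v |: S) = (~: S) :\ v by apply/setP => z; rewrite !inE negb_or.
  rewrite E; have := cardsD1 v (~: S); rewrite inE vS /= => Hc.
  by move: Hk; rewrite Hc add1n ltnS.
- by apply/set0Pn; exists v; rewrite !inE eqxx.
Qed.

Lemma harm_limit (R : realType) (V : finType) (e : rel V) (t : R)
   (w : nat -> {set V} -> R) (g : {set V} -> R) S :
  symmetric e -> (0 < #|V|)%N ->
  (forall n X, step e t 1 (w n) X = w n.+1 X) ->
  (forall X, ((fun n => w n X) @ \oo --> g X)%classic) ->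
  step e t 1 g S = g S.
Proof.
move=> sym N0 hw hc.
have H1 : ((fun n => step e t 1 (w n) S) @ \oo --> step e t 1 g S)%classic.
  have -> : (fun n => step e t 1 (w n) S) = (fun n => w n S +
     \sum_u \sum_(v | e u v) cf e t u v * (w n (upd S u v) - w n S)).
    by apply/funext => n; rewrite step_eq.
  rewrite step_eq //; apply: cvgD; first exact: hc.
  apply: (cvg_big (@add_continuous _)) => u _.
  apply: (cvg_big (@add_continuous _)) => v _.
  apply: cvgMr; apply: (cvgB (f := fun n => w n (upd S u v)) (g := fun n => w n S)); exact: hc.
have H2 : ((fun n => w n.+1 S) @ \oo --> step e t 1 g S)%classic.
  by have -> : (fun n => w n.+1 S) = (fun n => step e t 1 (w n) S) by apply/funext => n; rewrite hw.
move: H2; rewrite (cvg_shiftS (fun n => w n S)) => H2.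
exact: (cvg_unique _ H2 (hc S)).
Qed.

Lemma step_const (R : realType) (V : finType) (e : rel V) (t a : R) X :
  symmetric e -> (0 < #|V|)%N -> step e t 1 (fun _ => a) X = a.
Proof.
move=> sym N0; rewrite step_eq // big1 ?addr0 // => u _.
by rewrite big1 // => v _; rewrite subrr mulr0.
Qed.

Lemma pfullS (R : realType) (V : finType) (e : rel V) (t : R) n :
  pfull e t 1 n.+1 = step e t 1 (pfull e t 1 n).
Proof. by []. Qed.

Lemma iter_mono (R : realType) (V : finType) (e : rel V) (t : R) (h0 : {set V} -> R) :
  0 <= t <= 1 -> (forall X, h0 X <= step e t 1 h0 X) ->
  forall n X, iter n (step e t 1) h0 X <= iter n.+1 (step e t 1) h0 X.
Proof.
move=> t01 H; elim=> [|n IH] X //=.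
by apply: step_mono.
Qed.

Lemma iter_bound (R : realType) (V : finType) (e : rel V) (t : R) (h0 P : {set V} -> R) :
  0 <= t <= 1 -> (forall X, h0 X <= P X) -> (forall X, step e t 1 P X = P X) ->
  forall n X, iter n (step e t 1) h0 X <= P X.
Proof.
move=> t01 H HP; elim=> [|n IH] X //=.
by rewrite -HP; apply: step_mono.
Qed.

Lemma pfull_iter (R : realType) (V : finType) (e : rel V) (t : R) n :
  pfull e t 1 n = iter n (step e t 1) (pfull e t 1 0).
Proof. by elim: n => //= n <-. Qed.

Lemma iter_cvg (R : realType) (V : finType) (e : rel V) (t : R) (h0 P : {set V} -> R) X :
  0 <= t <= 1 -> (forall X, h0 X <= step e t 1 h0 X) ->
  (forall X, h0 X <= P X) -> (forall X, step e t 1 P X = P X) ->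
  [/\ cvgn (fun n => iter n (step e t 1) h0 X),
      limn (fun n => iter n (step e t 1) h0 X) <= P X &
      forall n, iter n (step e t 1) h0 X <= limn (fun n => iter n (step e t 1) h0 X)].
Proof.
move=> t01 Hm Hb HP.
have nd : nondecreasing_seq (fun n => iter n (step e t 1) h0 X).
  by apply/nondecreasing_seqP => n; apply: iter_mono.
have cv : cvgn (fun n => iter n (step e t 1) h0 X).
  apply: cvgP; apply: nondecreasing_cvgn => //.
  exists (P X) => _ [n _ <-]; exact: iter_bound.
split => //; last exact: nondecreasing_cvgn_le.
apply: limr_le => //; apply: nearW => n; exact: iter_bound.
Qed.

Lemma psi_le (R : realType) (V : finType) (p : V -> R) X :
  (forall v, 0 <= p v) -> 0 <= psi p X <= psi p [set: V]%SET.
Proof.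
move=> p0; rewrite /psi; apply/andP; split; first by apply: sumr_ge0.
rewrite big_mkcond [X in _ <= X]big_mkcond; apply: ler_sum => v _.
by rewrite inE; case: ifP.
Qed.

Lemma fp_formula (R : realType) (V : finType) (e : rel V) (t : R) (p : V -> R) S0 :
  symmetric e -> (forall u v : V, connect e u v) -> (0 < #|V|)%N -> 0 <= t <= 1 ->
  (forall v, 0 <= p v) -> 0 < psi p [set: V]%SET ->
  (forall u v, e u v -> p v * cf e t u v = p u * cf e t v u) ->
  fp e 1 t S0 = psi p S0 / psi p [set: V]%SET.
Proof.
move=> sym con N0 t01 p0 Z0 bal.
set Z := psi p [set: V]%SET.
pose Phi := fun X => 0 + Z^-1 * psi p X.
have PhiH : forall X, step e t 1 Phi X = Phi X.
  by move=> X; rewrite /Phi step_affine // step_psi.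
pose Cphi := fun X => 1 + (-1) * Phi X.
have CphiH : forall X, step e t 1 Cphi X = Cphi X.
  by move=> X; rewrite /Cphi step_affine // PhiH.
have Zn0 : Z != 0 by rewrite gt_eqF.
have Phi01 : forall X, 0 <= Phi X <= 1.
  move=> X; rewrite /Phi add0r; have /andP[a b] := @psi_le _ _ p X p0.
  rewrite mulr_ge0 ?invr_ge0 ?(ltW Z0) //= mulrC ler_pdivrMr //.
  by rewrite mul1r.
have PhiT : Phi [set: V]%SET = 1 by rewrite /Phi add0r mulVf.
have Phi0 : Phi finset.set0 = 0 by rewrite /Phi /psi big_set0 mulr0 addr0.
pose f0 := fun X : {set V} => if X == [set: V]%SET then (1:R) else 0.
pose z0 := fun X : {set V} => if X == finset.set0 then (1:R) else 0.
have f0m : forall X, f0 X <= step e t 1 f0 X.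
  move=> X; have [->|nX] := eqVneq X [set: V]%SET; first by rewrite step_setT.
  rewrite {1}/f0 (negbTE nX) -(@step_const _ _ e t 0 X sym N0); apply: step_mono => // Y.
  by rewrite /f0; case: ifP.
have z0m : forall X, z0 X <= step e t 1 z0 X.
  move=> X; have [->|nX] := eqVneq X finset.set0; first by rewrite step_set0.
  rewrite {1}/z0 (negbTE nX) -(@step_const _ _ e t 0 X sym N0); apply: step_mono => // Y.
  by rewrite /z0; case: ifP.
have f0b : forall X, f0 X <= Phi X.
  by move=> X; rewrite /f0; case: eqP => [->|_]; rewrite ?PhiT //; case/andP: (Phi01 X).
have z0b : forall X, z0 X <= Cphi X.
  move=> X; rewrite /z0 /Cphi; case: eqP => [->|_]; first by rewrite Phi0 mulr0 addr0.
  by case/andP: (Phi01 X) => _ b; rewrite mulN1r subr_ge0.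
pose fl := fun X => limn (fun n => iter n (step e t 1) f0 X).
pose zl := fun X => limn (fun n => iter n (step e t 1) z0 X).
have Hf := fun X => @iter_cvg _ _ e t f0 Phi X t01 f0m f0b PhiH.
have Hz := fun X => @iter_cvg _ _ e t z0 Cphi X t01 z0m z0b CphiH.
pose g := fun X => fl X + zl X.
have gH : forall X, step e t 1 g X = g X.
  move=> X; apply: (@harm_limit _ _ e t (fun n X => iter n (step e t 1) f0 X + iter n (step e t 1) z0 X) g X sym N0).
    by move=> n Y; rewrite step_add.
  move=> Y; apply: cvgD.
    by have [] := Hf Y.
  by have [] := Hz Y.
have g0 : forall X, f0 X + z0 X <= g X.
  move=> X; apply: lerD.
    by have [_ _ /(_ 0%N)] := Hf X.
  by have [_ _ /(_ 0%N)] := Hz X.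
have f0p : forall X, 0 <= f0 X by move=> X; rewrite /f0; case: ifP.
have z0p : forall X, 0 <= z0 X by move=> X; rewrite /z0; case: ifP.
have g1 : forall X, 1 <= g X.
  case: (@arg_minP _ _ {set V} finset.set0 predT g isT) => Sm _ Hmin.
  have Hm : forall X, g Sm <= g X by move=> X; apply: Hmin.
  suff : 1 <= g Sm by move=> H X; apply: le_trans H (Hm X).
  have [->|Sn0] := eqVneq Sm finset.set0.
    by apply: le_trans (g0 _); rewrite /z0 eqxx lerDr.
  have := @chain _ _ e t g (g Sm) sym con N0 t01 Hm gH _ Sm (leqnn _) Sn0 erefl.
  by move=> <-; apply: le_trans (g0 _); rewrite /f0 eqxx lerDl.
have fle : fl S0 <= Phi S0 by have [] := Hf S0.
have zle : zl S0 <= Cphi S0 by have [] := Hz S0.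
have := g1 S0; rewrite /g.
have -> : fp e 1 t S0 = fl S0.
  rewrite /fp; have -> : (fun n => pfull e t 1 n S0) = (fun n => iter n (step e t 1) f0 S0).
    by apply/funext => n; rewrite pfull_iter.
  by [].
move: fle zle; rewrite /Cphi /Phi => fle zle H.
have : fl S0 = 0 + Z^-1 * psi p S0 by lra.
by move=> ->; rewrite add0r mulrC.
Qed.
Lemma deriv_rat (R : realType) (f : R -> R) (a b c d x : R) :
  0 <= x <= 1 -> (forall t, 0 <= t <= 1 -> 0 < c + d * t) ->
  (forall t, 0 <= t <= 1 -> f t = (a + b * t) / (c + d * t)) ->
  deriv01 f x ((b * c - a * d) / (c + d * x) ^+ 2).
Proof.
move=> x01 Dp fE.
have Dx := Dp x x01.
pose k := fun h : R => (b * c - a * d) * ((c + d * h) * (c + d * x))^-1.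
have Hk : (k @ nbhs x --> (b * c - a * d) / (c + d * x) ^+ 2)%classic.
  rewrite expr2; apply: cvgMr; apply: cvgV; first by rewrite mulf_neq0 // gt_eqF.
  apply: cvgMl; apply: cvgD; first exact: cvg_cst.
  apply: cvgMr; exact: cvg_id.
rewrite /deriv01.
set q := fun h => (f h - f x) / (h - x).
have Hq : \forall h \near within [set h : R | 0 <= h <= 1]%classic (dnbhs x), k h = q h.
  near=> h.
  have /andP[h0 h1] : 0 <= h <= 1.
    by near: h; apply: (@near_withinT _ (dnbhs x) [set h : R | 0 <= h <= 1]%classic).
  have hx : h != x.
    near: h; apply: (@cvg_within _ (dnbhs x) _ [set h : R | 0 <= h <= 1]%classic). exact: (@nbhs_dnbhs_neq R x).
  have Dh : 0 < c + d * h by apply: Dp; rewrite h0 h1.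
  rewrite /k /q !fE ?h0 ?h1 //.
  have hx' : h - x != 0 by rewrite subr_eq0.
  field.
  by rewrite hx' !gt_eqF.
apply: cvg_trans (near_eq_cvg Hq) _.
apply: cvg_within_filter.
apply: cvg_within_filter.
exact: Hk.
Unshelve. all: by end_near.
Qed.
Lemma sum_card (R : realType) (V : finType) (P : pred V) (c : R) :
  \sum_(v | P v) c = c * #|[set v : V | P v]|%:R.
Proof.
rewrite (eq_bigl (mem [set v : V | P v])) ?sumr_const ?mulr_natr // => v.
exact: (esym (finset.in_set P v)).
Qed.

Lemma Dpos (R : realType) (d1 d2 n1 n2 : nat) (t : R) :
  0 <= t <= 1 -> (d1 < d2)%N -> (0 < n1)%N -> (0 < n2)%N ->
  0 < d1%:R * n2%:R + d2%:R * n1%:R + t * (d1%:R - d2%:R) * (n1%:R - n2%:R).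
Proof.
move=> /andP[t0 t1] d12 n10 n20.
have a0 : 0 <= d1%:R :> R by [].
have b1 : d1%:R + 1 <= d2%:R :> R by rewrite natr1 ler_nat.
have x1 : 1 <= n1%:R :> R by rewrite ler1n.
have y1 : 1 <= n2%:R :> R by rewrite ler1n.
have h1 : 0 <= (1 - t) * (d1%:R * n2%:R) by rewrite mulr_ge0 ?subr_ge0 ?mulr_ge0.
have h2 : 0 <= t * (d1%:R * n1%:R) by rewrite mulr_ge0 ?mulr_ge0.
have bx : 1 <= d2%:R * n1%:R :> R.
  by rewrite -[1]mulr1; apply: ler_pM => //; lra.
have by1 : 1 <= d2%:R * n2%:R :> R.
  by rewrite -[1]mulr1; apply: ler_pM => //; lra.
have h3 : 0 <= (1 - t) * (d2%:R * n1%:R - 1) by rewrite mulr_ge0 ?subr_ge0.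
have h4 : 0 <= t * (d2%:R * n2%:R - 1) by rewrite mulr_ge0 ?subr_ge0.
have -> : d1%:R * n2%:R + d2%:R * n1%:R + t * (d1%:R - d2%:R) * (n1%:R - n2%:R) =
  (1 - t) * (d1%:R * n2%:R) + t * (d1%:R * n1%:R) + (1 - t) * (d2%:R * n1%:R - 1)
  + t * (d2%:R * n2%:R - 1) + 1 :> R by ring.
lra.
Qed.

Lemma n_pos (V : finType) (P : pred V) a : P a -> (0 < #|[set v : V | P v]|)%N.
Proof. by move=> Pa; apply/card_gt0P; exists a; rewrite (finset.in_set P a). Qed.

Theorem mainTheorem18 (R : realType) (V : finType) (e : rel V) (d1 d2 : nat) :
  symmetric e -> irreflexive e -> (0 < #|V|)%N ->
  (forall u v : V, connect e u v) ->
  (d1 <= d2)%N ->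
  (forall v : V, deg e v = d1 \/ deg e v = d2) ->
  let n1 := #|[set v : V | deg e v == d1]| in
  let n2 := #|[set v : V | deg e v == d2]| in
  let D := fun delta : R =>
    d1%:R * n2%:R + d2%:R * n1%:R
    + delta * (d1%:R - d2%:R) * (n1%:R - n2%:R) in
  let Q := fun delta : R => (d2%:R - d1%:R) * (d1%:R + d2%:R) / (D delta) ^+ 2 in
  forall delta : R, 0 <= delta <= 1 ->
    (forall u : V, deg e u = d1 ->
       deriv01 (fun t : R => fp e 1 t [set u]) delta (- (n2%:R * Q delta)))
    /\ (forall u : V, deg e u = d2 ->
       deriv01 (fun t : R => fp e 1 t [set u]) delta (n1%:R * Q delta))
    /\ ((d1 < d2)%N -> (0 < n1)%N -> (0 < n2)%N ->
          - (n2%:R * Q delta) < 0 /\ 0 < n1%:R * Q delta)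
    /\ (d1 = d2 -> - (n2%:R * Q delta) = 0 /\ n1%:R * Q delta = 0).
Proof.
move=> sym irr N0 con d12 degs n1 n2 D Q delta Hd.
have Qpos : (d1 < d2)%N -> (0 < n1)%N -> (0 < n2)%N -> 0 < Q delta.
  move=> lt12 n10 n20; rewrite /Q; apply: divr_gt0.
    apply: mulr_gt0; first by rewrite subr_gt0 ltr_nat.
    by apply: ltr_wpDl => //; rewrite ltr0n; apply: leq_ltn_trans lt12.
  by apply: exprn_gt0; apply: Dpos.
have Q0 : d1 = d2 -> Q delta = 0 by move=> E; rewrite /Q E subrr !mul0r.
have part34 : ((d1 < d2)%N -> (0 < n1)%N -> (0 < n2)%N ->
          - (n2%:R * Q delta) < 0 /\ 0 < n1%:R * Q delta)
    /\ (d1 = d2 -> - (n2%:R * Q delta) = 0 /\ n1%:R * Q delta = 0).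
  split.
    move=> lt12 n10 n20; have Qp := Qpos lt12 n10 n20; split.
      by rewrite oppr_lt0 mulr_gt0 // ltr0n.
    by rewrite mulr_gt0 // ltr0n.
  by move=> E; rewrite (Q0 E) !mulr0 oppr0.
suff : (forall u : V, deg e u = d1 ->
       deriv01 (fun t : R => fp e 1 t [set u]) delta (- (n2%:R * Q delta)))
    /\ (forall u : V, deg e u = d2 ->
       deriv01 (fun t : R => fp e 1 t [set u]) delta (n1%:R * Q delta)).
  by case=> H1 H2; split; [|split].
case: (pselect (exists a b : V, [/\ deg e a = d1, deg e b = d2 & d1 <> d2])) =>
   [[a [b [ha hb hne]]] | Hnr].
- have lt12 : (d1 < d2)%N by rewrite ltn_neqAle d12 andbT; apply/eqP.
  have n10 : (0 < n1)%N by apply: (@n_pos V (fun v => deg e v == d1) a); rewrite /= ha.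
  have n20 : (0 < n2)%N by apply: (@n_pos V (fun v => deg e v == d2) b); rewrite /= hb.
  have Dp : forall t, 0 <= t <= 1 -> 0 < D t by move=> t t01; apply: Dpos.
  have n12 : forall v, (deg e v != d1) = (deg e v == d2).
    move=> v; case: (degs v) => ->; rewrite eqxx //=.
      by apply/esym/eqP.
    by apply/eqP => E; apply: hne.
  pose p := fun (t : R) (v : V) => t * (deg e v)%:R + (1 - t) * ((d1 + d2)%:R - (deg e v)%:R).
  have pval1 : forall t v, deg e v = d1 -> p t v = t * d1%:R + (1 - t) * d2%:R.
    by move=> t v E; rewrite /p E natrD; ring.
  have pval2 : forall t v, deg e v = d2 -> p t v = t * d2%:R + (1 - t) * d1%:R.
    by move=> t v E; rewrite /p E natrD; ring.
  have p0 : forall t, 0 <= t <= 1 -> forall v, 0 <= p t v.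
    move=> t /andP[t0 t1] v; have t1' : 0 <= 1 - t by rewrite subr_ge0.
    by case: (degs v) => E; [rewrite pval1 | rewrite pval2] => //; rewrite addr_ge0 // mulr_ge0.
  have psiT : forall t, psi (p t) [set: V]%SET = D t.
    move=> t; rewrite /psi (eq_bigl (fun _ => true)); last by move=> v; rewrite inE.
    rewrite (bigID (fun v => deg e v == d1)) /=.
    rewrite (eq_bigr (fun _ => t * d1%:R + (1 - t) * d2%:R)); last by move=> v /eqP; apply: pval1.
    rewrite [X in _ + X](eq_bigl (fun v => deg e v == d2)); last by move=> v; rewrite n12.
    rewrite [X in _ + X](eq_bigr (fun _ => t * d2%:R + (1 - t) * d1%:R)); last by move=> v /eqP; apply: pval2.
    rewrite !sum_card -/n1 -/n2 /D; ring.
  have bal : forall t, 0 <= t <= 1 -> forall u v, e u v -> p t v * cf e t u v = p t u * cf e t v u.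
    move=> t t01 u v euv.
    have du : (deg e u)%:R != 0 :> R by rewrite pnatr_eq0 -lt0n (@deg_pos _ e u v euv).
    have dv : (deg e v)%:R != 0 :> R.
      by rewrite pnatr_eq0 -lt0n (@deg_pos _ e v u); rewrite // sym.
    have NN : #|V|%:R != 0 :> R by rewrite pnatr_eq0 -lt0n.
    have [Heq|Hs] : deg e u = deg e v \/ (deg e u + deg e v = d1 + d2)%N.
      by case: (degs u) (degs v) => -> [] ->; auto; right; rewrite addnC.
      by rewrite /p /cf Heq.
    have eu : (d1 + d2)%:R - (deg e v)%:R = (deg e u)%:R :> R by rewrite -Hs natrD; ring.
    have ev : (d1 + d2)%:R - (deg e u)%:R = (deg e v)%:R :> R by rewrite -Hs natrD; ring.
    rewrite /p /cf eu ev; field.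
    by rewrite du dv NN.
  have Hfp : forall t, 0 <= t <= 1 -> forall u, fp e 1 t [set u] = p t u / D t.
    move=> t t01 u.
    have Z0 : 0 < psi (p t) [set: V]%SET by rewrite psiT; exact: Dp.
    rewrite (@fp_formula _ _ e t (p t) [set u] sym con N0 t01 (p0 t t01) Z0 (bal t t01)).
    by rewrite psiT /psi big_set1.
  set c := d1%:R * n2%:R + d2%:R * n1%:R : R.
  set d := (d1%:R - d2%:R) * (n1%:R - n2%:R) : R.
  have DE : forall t, D t = c + d * t by move=> t; rewrite /D /c /d; ring.
  have Dp' : forall t, 0 <= t <= 1 -> 0 < c + d * t by move=> t t01; rewrite -DE; exact: Dp.
  have Dn0 : c + d * delta != 0 by rewrite gt_eqF // Dp'.
  split => u hu.
  + have fE : forall t, 0 <= t <= 1 -> fp e 1 t [set u] = (d2%:R + (d1%:R - d2%:R) * t) / (c + d * t).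
      by move=> t t01; rewrite Hfp // pval1 // DE; congr (_ / _); ring.
    have -> : - (n2%:R * Q delta) = ((d1%:R - d2%:R) * c - d2%:R * d) / (c + d * delta) ^+ 2.
      by rewrite /Q DE /c /d; field; rewrite -/c -/d.
    exact: (@deriv_rat R (fun t => fp e 1 t [set u]) _ _ c d delta Hd Dp' fE).
  + have fE : forall t, 0 <= t <= 1 -> fp e 1 t [set u] = (d1%:R + (d2%:R - d1%:R) * t) / (c + d * t).
      by move=> t t01; rewrite Hfp // pval2 // DE; congr (_ / _); ring.
    have -> : n1%:R * Q delta = ((d2%:R - d1%:R) * c - d1%:R * d) / (c + d * delta) ^+ 2.
      by rewrite /Q DE /c /d; field; rewrite -/c -/d.
    exact: (@deriv_rat R (fun t => fp e 1 t [set u]) _ _ c d delta Hd Dp' fE).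
- have /card_gt0P [x0 _] := N0.
  have reg : forall v, deg e v = deg e x0.
    move=> v; case: (degs v) => hv; case: (degs x0) => hx; rewrite hv hx //.
      have [//|NE] := eqVneq d1 d2.
      by exfalso; apply: Hnr; exists v, x0; split => //; apply/eqP.
    have [//|NE] := eqVneq d2 d1.
    by exfalso; apply: Hnr; exists x0, v; split => //; apply/eqP; rewrite eq_sym.
  pose p := fun _ : V => (1 : R).
  have p0 : forall v, 0 <= p v by move=> v; rewrite /p.
  have Z0 : 0 < psi p [set: V]%SET.
    rewrite /psi (bigD1 x0) ?inE //=.
    have : 0 <= \sum_(i in [set: V]%SET | i != x0) p i by apply: sumr_ge0.
    rewrite /p; lra.
  have bal : forall t, forall u v, e u v -> p v * cf e t u v = p u * cf e t v u.
    by move=> t u v _; rewrite /p /cf (reg u) (reg v).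
  set k := psi p [set: V]%SET.
  have fE : forall u t, 0 <= t <= 1 -> fp e 1 t [set u] = (psi p [set u] / k + 0 * t) / (1 + 0 * t).
    move=> u t t01; rewrite mul0r !addr0 divr1.
    exact: (@fp_formula _ _ e t p [set u] sym con N0 t01 p0 Z0 (bal t)).
  have Dp : forall t : R, 0 <= t <= 1 -> 0 < 1 + 0 * t by move=> t _; rewrite mul0r addr0.
  have l0 : forall a : R, (0 * 1 - a * 0) / (1 + 0 * delta) ^+ 2 = 0.
    by move=> a; rewrite !mul0r !mulr0 subr0 mul0r.
  split => u hu.
  + have -> : - (n2%:R * Q delta) = 0.
      have [E|NE] := eqVneq d1 d2; first by rewrite Q0 // mulr0 oppr0.
      have -> : n2 = 0%N.
        apply: eq_card0 => v; rewrite !inE; apply/negP => /eqP hv.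
        by apply: Hnr; exists u, v; split => //; apply/eqP.
      by rewrite mul0r oppr0.
    rewrite -(l0 (psi p [set u] / k)).
    exact: (@deriv_rat R (fun t => fp e 1 t [set u]) _ 0 1 0 delta Hd Dp (fE u)).
  + have -> : n1%:R * Q delta = 0.
      have [E|NE] := eqVneq d1 d2; first by rewrite Q0 // mulr0.
      have -> : n1 = 0%N.
        apply: eq_card0 => v; rewrite !inE; apply/negP => /eqP hv.
        by apply: Hnr; exists v, u; split => //; apply/eqP.
      by rewrite mul0r.
    rewrite -(l0 (psi p [set u] / k)).
    exact: (@deriv_rat R (fun t => fp e 1 t [set u]) _ 0 1 0 delta Hd Dp (fE u)).
Qed.
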